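(* Let $K$ be a perfect field. Then $K[X_1]^{G_1}=K[a_1,\Delta]$ if $\mathrm{char}(K)=2$, and $K[X_1]^{G_1}=K[b_2,\Delta]$ if $\mathrm{char}(K)=3$.
   Context: $K[X_1]=K[a_1,a_2,a_3,a_4,a_6]$ is the coordinate ring of the space of Weierstrass equations $y^2+a_1xy+a_3y=x^3+a_2x^2+a_4x+a_6$. $G_1$ is the group of substitutions $[1;r,s,t]$: $x=x'+r$, $y=y'+sx'+t$, acting on the coefficients; $K[X_1]^{G_1}$ is the ring of polynomials $F$ with $F\circ g=F$ for all $g\in G_1(\overline K)$. Here $b_2=a_1^2+4a_2$, $b_4=2a_4+a_1a_3$, $b_6=a_3^2+4a_6$, $b_8=a_1^2a_6+4a_2a_6-a_1a_3a_4+a_2a_3^2-a_4^2$, and $\Delta=-b_2^2b_8-8b_4^3-27b_6^2+9b_2b_4b_6$. *)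

(* Defs.v *)
From HB Require Import structures.
From mathcomp Require Import all_boot all_order all_algebra all_field.
From mathcomp Require Import mpoly.
Set Implicit Arguments. Unset Strict Implicit. Unset Printing Implicit Defensive.
Import GRing.Theory.
Local Open Scope ring_scope.

(* K[X_1] = K[a1,a2,a3,a4,a6] is modelled as {mpoly K[5]}, with
   a1 = 'X_0, a2 = 'X_1, a3 = 'X_2, a4 = 'X_3, a6 = 'X_4. *)
Section Weierstrass.
Variable K : fieldType.

Definition a1 : {mpoly K[5]} := 'X_(inord 0).
Definition a2 : {mpoly K[5]} := 'X_(inord 1).
Definition a3 : {mpoly K[5]} := 'X_(inord 2).
Definition a4 : {mpoly K[5]} := 'X_(inord 3).
Definition a6 : {mpoly K[5]} := 'X_(inord 4).

Definition b2 : {mpoly K[5]} := a1 ^+ 2 + 4%:R * a2.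
Definition b4 : {mpoly K[5]} := 2%:R * a4 + a1 * a3.
Definition b6 : {mpoly K[5]} := a3 ^+ 2 + 4%:R * a6.
Definition b8 : {mpoly K[5]} :=
  a1 ^+ 2 * a6 + 4%:R * a2 * a6 - a1 * a3 * a4 + a2 * a3 ^+ 2 - a4 ^+ 2.
Definition Delta : {mpoly K[5]} :=
  - b2 ^+ 2 * b8 - 8%:R * b4 ^+ 3 - 27%:R * b6 ^+ 2 + 9%:R * b2 * b4 * b6.

Definition generated2 (f g : {mpoly K[5]}) (F : {mpoly K[5]}) : Prop :=
  exists P : {mpoly K[2]}, F = P \mPo [tuple f; g].

Definition perfect_field : Prop :=
  forall p : nat, p \in [pchar K] -> forall x : K, exists y : K, y ^+ p = x.
End Weierstrass.

(* L is an algebraic closure of K via iota: L is algebraically closed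
   (closedFieldType) and every element of L is algebraic over iota(K). *)
Definition algebraic_over (K : fieldType) (L : fieldType)
  (iota : {rmorphism K -> L}) : Prop :=
  forall x : L, exists p : {poly K}, p != 0 /\ root (map_poly iota p) x.

(* Action of the substitution [1;r,s,t] : x = x' + r, y = y' + s x' + t
   on a point a = (a1,a2,a3,a4,a6) of X_1 (Silverman, Table 3.1, u = 1). *)
Definition G1act (L : ringType) (r s t : L) (a : 'I_5 -> L) : 'I_5 -> L :=
  let A1 := a (inord 0) in let A2 := a (inord 1) in let A3 := a (inord 2) in
  let A4 := a (inord 3) in let A6 := a (inord 4) in
  fun i => match val i with
  | 0 => A1 + 2%:R * s
  | 1 => A2 - s * A1 + 3%:R * r - s ^+ 2
  | 2 => A3 + r * A1 + 2%:R * t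
  | 3 => A4 - s * A3 + 2%:R * r * A2 - (t + r * s) * A1 + 3%:R * r ^+ 2
         - 2%:R * s * t
  | _ => A6 + r * A4 + r ^+ 2 * A2 + r ^+ 3 - t * A3 - t ^+ 2 - r * t * A1
  end.

(* F in K[X_1]^{G_1}: F o g = F (as functions on X_1(Kbar)) for all
   g = [1;r,s,t] in G_1(Kbar). *)
Definition G1_invariant (K : fieldType) (L : fieldType)
  (iota : {rmorphism K -> L}) (F : {mpoly K[5]}) : Prop :=
  forall (r s t : L) (a : 'I_5 -> L),
    (map_mpoly iota F).@[G1act r s t a] = (map_mpoly iota F).@[a].

(* Main.v *)
Require Import Defs.
From HB Require Import structures.
From mathcomp Require Import all_boot all_order all_algebra all_field.
From mathcomp Require Import mpoly.
From mathcomp Require Import ring.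
Set Implicit Arguments. Unset Strict Implicit. Unset Printing Implicit Defensive.
Import GRing.Theory.
Local Open Scope ring_scope.

Lemma mmap_comp n (R : nzRingType) (S T : comNzRingType) (phi : {rmorphism S -> T})
  (g : R -> S) (h : 'I_n -> S) (p : {mpoly R[n]}) :
  phi (mmap g h p) = mmap (phi \o g) (phi \o h) p.
Proof.
rewrite /mmap rmorph_sum; apply: eq_bigr => m _.
rewrite rmorphM /mmap1 rmorph_prod /=; congr (_ * _).
by apply: eq_bigr => i _; rewrite rmorphXn.
Qed.

Lemma eq_mmap n (R S : nzRingType) (g g' : R -> S) (h h' : 'I_n -> S) (p : {mpoly R[n]}) :
  g =1 g' -> h =1 h' -> mmap g h p = mmap g' h' p.
Proof.
move=> eg eh; rewrite /mmap; apply: eq_bigr => m _.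
rewrite eg /mmap1; congr (_ * _); apply: eq_bigr => i _; by rewrite eh.
Qed.

Lemma evE n (K : fieldType) (L : comNzRingType) (iota : {rmorphism K -> L})
  (p : {mpoly K[n]}) (v : 'I_n -> L) :
  (map_mpoly iota p).@[v] = mmap iota v p.
Proof.
rewrite /map_mpoly -[LHS]/(meval v _) mmap_comp; apply: eq_mmap => x /=.
  by rewrite mevalC.
by rewrite mevalXU.
Qed.

Lemma poly_all0 (L : closedFieldType) (p : {poly L}) :
  (forall x, p.[x] = 0) -> p = 0.
Proof.
move=> H; apply/eqP; apply: contraT => /closed_nonrootP [x].
by rewrite /root H eqxx.
Qed.

Lemma poly_all0nz (L : closedFieldType) (p : {poly L}) :
  (forall x, x != 0 -> p.[x] = 0) -> p = 0.
Proof.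
move=> H; have : p * 'X = 0.
  apply: poly_all0 => x; rewrite hornerMX.
  by have [->|nz] := eqVneq x 0; rewrite ?mulr0 // H ?mul0r.
by move/eqP; rewrite mulf_eq0 polyX_eq0 orbF => /eqP.
Qed.

Definition unmuni n (R : comNzRingType) (q : {poly {mpoly R[n]}}) : {mpoly R[n.+1]} :=
  (map_poly (@mwiden n R) q).[ 'X_ord_max ].

Lemma muniK n (R : comNzRingType) : cancel (@muni n R) (@unmuni n R).
Proof.
move=> p; rewrite /unmuni muniE rmorph_sum horner_sum [RHS]mpolyE.
apply: eq_bigr => m _.
rewrite -mul_polyC rmorphM /= map_polyC map_polyXn hornerCM hornerXn.
rewrite -[mpoly_mwiden__canonical__Algebra_Additive _ _ _]/(mwiden _) mwidenZ mwidenX -scalerAl mpolyXn -mpolyXD; congr (_ *: 'X_[_]).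
apply/mnmP => j; rewrite mnmDE mulmnE mnm1E.
case: (unliftP ord_max j) => [k ->|->].
  have -> : lift ord_max k = widen_ord (leqnSn n) k by apply/val_inj; rewrite /= /bump leqNgt ltn_ord.
  rewrite mnmwiden_widen mnmE -val_eqE /= gtn_eqF ?ltn_ord // mul0n addn0.
  by [].
rewrite eqxx mul1n.
have -> := mnmwiden_ordmax [multinom [tuple m (widen_ord (leqnSn n) i) | i < n]].
by [].
Qed.

Lemma meval_mwiden n (R : comNzRingType) (v : 'I_n.+1 -> R) (c : {mpoly R[n]}) :
  (mwiden c).@[v] = c.@[fun j => v (widen_ord (leqnSn n) j)].
Proof.
rewrite /mwiden -[LHS]/(meval v _) mmap_comp; apply: eq_mmap => x /=.
  by rewrite mevalC.
by rewrite mevalXU.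
Qed.

Lemma meval_unmuni n (R : comNzRingType) (v : 'I_n.+1 -> R) q :
  (unmuni q).@[v] = (map_poly (meval (fun j => v (widen_ord (leqnSn n) j))) q).[v ord_max].
Proof.
rewrite /unmuni -[LHS]/(meval v _) -horner_map /= mevalXU -map_poly_comp.
congr (_.[_]); apply: eq_map_poly => c /=; exact: meval_mwiden.
Qed.

Lemma mpoly_all0 (L : closedFieldType) n (p : {mpoly L[n]}) :
  (forall v, p.@[v] = 0) -> p = 0.
Proof.
elim: n p => [|n IH] p H.
  have := H (fun _ => 0); rewrite mevalE => H0.
  have E1 : forall m : 'X_{1..0}, 'X_[m] = (1 : {mpoly L[0]}).
    move=> m; have -> : m = 0%MM by apply/mnmP => -[].
    exact: mpolyX0.
  have -> : p = (\sum_(m <- msupp p) p@_m) *: 1.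
    rewrite scaler_suml {1}(mpolyE p).
    by apply: eq_bigr => m _; rewrite E1.
  have -> : \sum_(m <- msupp p) p@_m = 0.
    rewrite -[RHS]H0; apply: eq_bigr => m _; by rewrite big_ord0 mulr1.
  by rewrite scale0r.
rewrite -(muniK p).
suff -> : muni p = 0 by rewrite /unmuni rmorph0 horner0.
apply/polyP => k; rewrite coef0; apply: IH => v'.
pose Q := map_poly (meval v') (muni p).
have -> : ((muni p)`_k).@[v'] = Q`_k by rewrite coef_map.
suff -> : Q = 0 by rewrite coef0.
apply: poly_all0 => x.
pose v (i : 'I_n.+1) := if (insub (val i) : option 'I_n) is Some j then v' j else x.
have := H v; rewrite -{1}(muniK p) meval_unmuni.
have -> : v ord_max = x by rewrite /v insubN //= ltnn.
rewrite (@eq_map_poly _ _ _ (meval v')) //.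
move=> c; apply: meval_eq => j; by rewrite /v /= valK.
Qed.

Lemma key (L : closedFieldType) (w : L -> {poly L}) :
  (forall y, exists c, (w c).[0] = y) ->
  forall N (B : {poly {poly L}}) (Ap : L -> {poly L}),
  (forall c, 'X^N * Ap c = B.[w c]) -> forall k j, (j < N)%N -> (B`_k)`_j = 0.
Proof.
move=> Hw; elim=> [|N IH] B Ap H k j //.
have B0 : forall k, (B`_k)`_0 = 0.
  pose B0 := map_poly (horner_eval (0 : L)) B.
  have : B0 = 0.
    apply: poly_all0 => y; have [c <-] := Hw y.
    rewrite /B0 horner_map /= horner_evalE -H hornerM hornerXn expr0n /= mul0r.
    by [].
  move=> HB0 k0; have := congr1 (fun q : {poly L} => q`_k0) HB0 => /=.
  by rewrite coef_map /= horner_evalE horner_coef0 coef0.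
pose B' := map_poly (drop_poly 1) B.
have EB : B = B' * ('X)%:P.
  apply/polyP => i; rewrite coefMC coef_map /=.
  rewrite -{1}(poly_take_drop 1 (B`_i)) expr1.
  suff -> : take_poly 1 (B`_i) = 0 by rewrite add0r.
  apply/polyP => l; rewrite coef_take_poly coef0; case: l => //= _.
have H' : forall c, 'X^N * Ap c = B'.[w c].
  move=> c; apply: (@mulIf _ 'X); first by rewrite polyX_eq0.
  by rewrite -mulrA (mulrC (Ap c)) mulrA -exprSr H EB hornerM hornerC.
case: j => [_|j]; first exact: B0.
rewrite ltnS => ltjN.
rewrite EB coefMC coefMX /=.
by rewrite (IH B' Ap H' k j ltjN).
Qed.

Section Main.
Variables (K : fieldType) (L : closedFieldType) (iota : {rmorphism K -> L}).

Local Notation E p v := (mmap iota v p).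

Lemma EX n (i : 'I_n) (v : 'I_n -> L) : E ('X_i : {mpoly K[n]}) v = v i.
Proof. by rewrite mmapX mmap1U. Qed.

Lemma EX' n (i : 'I_n) (v : 'I_n -> L) :
  (mmap iota v : {rmorphism {mpoly K[n]} -> L}) 'X_i = v i.
Proof. exact: EX. Qed.

Lemma EZ' n c (p : {mpoly K[n]}) (v : 'I_n -> L) :
  (mmap iota v : {rmorphism {mpoly K[n]} -> L}) (c *: p) =
  iota c * (mmap iota v : {rmorphism {mpoly K[n]} -> L}) p.
Proof. exact: mmapZ. Qed.

Lemma EM n (p q : {mpoly K[n]}) (v : 'I_n -> L) :
  E (p * q) v = E p v * E q v.
Proof. exact: rmorphM. Qed.

Lemma EXn n (p : {mpoly K[n]}) k (v : 'I_n -> L) :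
  E (p ^+ k) v = E p v ^+ k.
Proof. exact: rmorphXn. Qed.

Lemma Esum n (I : Type) (r : seq I) (Pr : pred I) (Fn : I -> {mpoly K[n]}) v :
  E (\sum_(i <- r | Pr i) Fn i) v = \sum_(i <- r | Pr i) E (Fn i) v.
Proof. exact: rmorph_sum. Qed.

Lemma EB n (p q : {mpoly K[n]}) (v : 'I_n -> L) :
  E (p - q) v = E p v - E q v.
Proof. exact: rmorphB. Qed.

Lemma size_mm (q : {poly {poly K}}) : size (map_poly (map_poly iota) q) = size q.
Proof.
case: (eqVneq q 0) => [->|nz].
  by rewrite map_poly0 !size_poly0.
rewrite size_map_poly_id0 //.
by rewrite map_poly_eq0 lead_coef_eq0.
Qed.

Lemma expand_pp (q : {poly {poly K}}) D (x e : L) :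
  (size q <= D)%N -> (forall k, leq (size q`_k) D) ->
  ((map_poly (map_poly iota) q).[e%:P]).[x] =
  \sum_(k < D) \sum_(i < D) iota (q`_k`_i) * x ^+ i * e ^+ k.
Proof.
move=> sq sk; rewrite (horner_coef_wide _ (leq_trans (eq_leq (size_mm q)) sq)).
rewrite horner_sum; apply: eq_bigr => k _.
rewrite hornerM -rmorphXn hornerC coef_map /=.
rewrite (horner_coef_wide _ (leq_trans (eq_leq (size_map_poly _ _)) (sk k))).
rewrite mulr_suml; apply: eq_bigr => i _; by rewrite coef_map.
Qed.


Definition DeltaE {R : comNzRingType} (A1 A2 A3 A4 A6 : R) : R :=
  let b2 := A1 ^+ 2 + 4%:R * A2 in
  let b4 := 2%:R * A4 + A1 * A3 in
  let b6 := A3 ^+ 2 + 4%:R * A6 in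
  let b8 := A1 ^+ 2 * A6 + 4%:R * A2 * A6 - A1 * A3 * A4 + A2 * A3 ^+ 2 - A4 ^+ 2 in
  - b2 ^+ 2 * b8 - 8%:R * b4 ^+ 3 - 27%:R * b6 ^+ 2 + 9%:R * b2 * b4 * b6.

Lemma DeltaE_inv (R : comNzRingType) (A1 A2 A3 A4 A6 r s t : R) :
  DeltaE (A1 + 2%:R * s) (A2 - s * A1 + 3%:R * r - s ^+ 2) (A3 + r * A1 + 2%:R * t)
   (A4 - s * A3 + 2%:R * r * A2 - (t + r * s) * A1 + 3%:R * r ^+ 2 - 2%:R * s * t)
   (A6 + r * A4 + r ^+ 2 * A2 + r ^+ 3 - t * A3 - t ^+ 2 - r * t * A1)
  = DeltaE A1 A2 A3 A4 A6.
Proof. rewrite /DeltaE. ring. Qed.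

Lemma E_Delta (a : 'I_5 -> L) : E (Delta K) a =
  DeltaE (a (inord 0)) (a (inord 1)) (a (inord 2)) (a (inord 3)) (a (inord 4)).
Proof.
rewrite /Delta /b2 /b4 /b6 /b8 /a1 /a2 /a3 /a4 /a6 /DeltaE.
rewrite !(rmorph_nat, rmorph1, rmorphB, rmorphD, rmorphM, rmorphN, rmorphXn) !EX'; ring.
Qed.

Lemma G1E r s t (a : 'I_5 -> L) :
  let A1 := a (inord 0) in let A2 := a (inord 1) in let A3 := a (inord 2) in
  let A4 := a (inord 3) in let A6 := a (inord 4) in
  [/\ G1act r s t a (inord 0) = A1 + 2%:R * s,
      G1act r s t a (inord 1) = A2 - s * A1 + 3%:R * r - s ^+ 2,
      G1act r s t a (inord 2) = A3 + r * A1 + 2%:R * t,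
      G1act r s t a (inord 3) = A4 - s * A3 + 2%:R * r * A2 - (t + r * s) * A1 + 3%:R * r ^+ 2
         - 2%:R * s * t &
      G1act r s t a (inord 4) = A6 + r * A4 + r ^+ 2 * A2 + r ^+ 3 - t * A3 - t ^+ 2 - r * t * A1].
Proof. by rewrite /G1act /= !inordK. Qed.

Lemma Delta_inv r s t a : E (Delta K) (G1act r s t a) = E (Delta K) a.
Proof.
rewrite !E_Delta; have [-> -> -> -> ->] := G1E r s t a.
exact: DeltaE_inv.
Qed.


Lemma signaux (u X1 Y C xi ek : L) : u * u = 1 ->
  X1 * Y * (C * xi * ek) = u * (X1 * (C * xi)) * (u * Y * ek).
Proof.
move=> hu; transitivity ((u * u) * (X1 * Y * (C * xi * ek))); first by rewrite hu mul1r.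
ring.
Qed.

Section Generic.
Variables (f : {mpoly K[5]}) (ix ic : 'I_5) (m : nat) (w : L -> {poly L}).

Definition nf (x e : L) (i : 'I_5) : L :=
  if i == ix then x else if i == inord 4 then e else 0.
Definition dp (x c : L) (i : 'I_5) : L :=
  if i == ix then x else if i == ic then c else 0.

Hypothesis Hf_inv : forall r s t a, E f (G1act r s t a) = E f a.
Hypothesis Hnf : forall a, E f a != 0 -> exists r s t e, G1act r s t a =1 nf (E f a) e.
Hypothesis HDnf : forall x e, E (Delta K) (nf x e) = - x ^+ m * e.
Hypothesis Hdpf : forall x c, E f (dp x c) = x.
Hypothesis HdpD : forall x c, E (Delta K) (dp x c) = (w c).[x].
Hypothesis Hw : forall y, exists c, (w c).[0] = y.

Lemma step1 F : (forall r s t a, E F (G1act r s t a) = E F a) ->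
  forall a, E f a != 0 -> exists e,
    E F a = E F (nf (E f a) e) /\ E (Delta K) a = - (E f a) ^+ m * e.
Proof.
move=> HF a nz; have [r [s [t [e He]]]] := Hnf nz.
exists e; split.
  by rewrite -(HF r s t a); apply: eq_mmap.
by rewrite -(Delta_inv r s t a) -HDnf; apply: eq_mmap.
Qed.

Lemma inv_gen F : (forall r s t a, E F (G1act r s t a) = E F a) ->
  exists P : {mpoly K[2]}, F = P \mPo [tuple f; Delta K].
Proof.
move=> HF.
pose hh (i : 'I_5) : {poly {poly K}} :=
  if i == ix then ('X)%:P else if i == inord 4 then 'X else 0.
pose GG := mmap (fun k : K => (k%:P)%:P) hh F.
have GGe : forall x e, E F (nf x e) = ((map_poly (map_poly iota) GG).[e%:P]).[x].
  move=> x e.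
  rewrite -!horner_evalE (mmap_comp (map_poly (map_poly iota))).
  rewrite (mmap_comp (horner_eval e%:P)) (mmap_comp (horner_eval x)).
  apply: eq_mmap => [k|i] /=.
    rewrite !horner_evalE !map_polyC hornerC.
    by change (iota k = (map_poly iota k%:P).[x]); rewrite map_polyC hornerC.
  rewrite /hh /nf !horner_evalE.
  case: (i == ix); first by rewrite map_polyC /= map_polyX !hornerC hornerX.
  case: (i == inord 4); first by rewrite map_polyX hornerX hornerC.
  by rewrite map_poly0 !horner0.
pose sz := fun k : nat => size GG`_k.
pose D := (size GG + \max_(k < size GG) sz k)%N.
have sGG : (size GG <= D)%N by rewrite leq_addr.
have sk : forall k, leq (size GG`_k) D.
  move=> k; case: (ltnP k (size GG)) => [lt|ge].
    apply: leq_trans (leq_addl _ _).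
    by have := @leq_bigmax _ (fun j : 'I_(size GG) => sz j) (Ordinal lt).
  by rewrite nth_default // size_poly0.
have GGe2 : forall x e, E F (nf x e) =
    \sum_(k < D) \sum_(i < D) iota (GG`_k`_i) * x ^+ i * e ^+ k.
  by move=> x e; rewrite GGe (expand_pp _ _ sGG sk).
have supp : forall k i, (i < m * k)%N -> GG`_k`_i = 0.
  pose Ap (c : L) := mmap (fun k : K => (iota k)%:P)
     (fun i : 'I_5 => if i == ix then 'X else if i == ic then c%:P else 0) F.
  have Ape : forall c x, (Ap c).[x] = E F (dp x c).
    move=> c x; rewrite -horner_evalE mmap_comp; apply: eq_mmap => [k|i] /=.
      by rewrite horner_evalE hornerC.
    rewrite /dp horner_evalE; case: (i == ix); first by rewrite hornerX.
    by case: (i == ic); rewrite ?hornerC ?horner0.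
  pose B : {poly {poly L}} :=
    \poly_(k < D) ((-1) ^+ k *: ('X^(m * (D - k)) * map_poly iota GG`_k)).
  have HB : forall c, 'X^(m * D) * Ap c = B.[w c].
    move=> c; apply/eqP; rewrite -subr_eq0; apply/eqP; apply: poly_all0nz => x nzx.
    rewrite hornerD hornerN hornerM hornerXn Ape.
    have nz : E f (dp x c) != 0 by rewrite Hdpf.
    have [e [He1 He2]] := step1 HF nz.
    rewrite Hdpf in He1 He2; rewrite HdpD in He2.
    rewrite He1 GGe2 horner_poly horner_sum.
    apply/eqP; rewrite subr_eq0; apply/eqP.
    rewrite mulr_sumr; apply: eq_bigr => -[k ltk] _ /=.
    rewrite hornerM hornerZ hornerM hornerXn horner_exp He2.
    rewrite (horner_coef_wide _ (leq_trans (eq_leq (size_map_poly _ _)) (sk k))).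
    rewrite !mulr_sumr mulr_suml.
    apply: eq_bigr => i _; rewrite coef_map /=.
    pose u : L := (-1) ^+ k.
    have hu : u * u = 1 by rewrite -expr2 sqrr_sign.
    have hx : x ^+ (m * D) = x ^+ (m * (D - k)) * (x ^+ m) ^+ k.
      by rewrite -exprM -exprD -mulnDr subnK // ltnW.
    rewrite hx exprMn (exprNn (x ^+ m)) -/u; exact: signaux.
  have K0 := key Hw HB.
  move=> k i lt; case: (ltnP k D) => kD; last first.
    by rewrite (nth_default _ (leq_trans sGG kD)) coef0.
  have := K0 k (i + m * (D - k))%N.
  rewrite coef_poly kD coefZ coefXnM (ltnNge (i + _) (m * (D - k))) leq_addl /= addnK coef_map.
  have lt2 : (i + m * (D - k) < m * D)%N.
    by rewrite -{2}(subnK (ltnW kD)) mulnDr addnC ltn_add2l.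
  move=> /(_ lt2) /eqP; rewrite mulf_eq0 signr_eq0 /= fmorph_eq0.
  by move/eqP.
pose P : {mpoly K[2]} := \sum_(k < D) \sum_(i < D)
   ((GG`_k`_i * (-1) ^+ k) *: ('X_ord0 ^+ (i - m * k) * 'X_ord_max ^+ k)).
have Pe : forall v : 'I_2 -> L, E P v = \sum_(k < D) \sum_(i < D)
   (iota GG`_k`_i * (-1) ^+ k * (v ord0) ^+ (i - m * k) * (v ord_max) ^+ k).
  move=> v; rewrite /P Esum; apply: eq_bigr => k _.
  rewrite Esum; apply: eq_bigr => i _.
  rewrite mmapZ EM !EXn !EX.
  by rewrite rmorphM rmorphXn rmorphN rmorph1 !mulrA.
have Ecomp : forall a, E (P \mPo [tuple f; Delta K]) a =
    E P (fun j => E (tnth [tuple f; Delta K] j) a).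
  move=> a; rewrite /comp_mpoly (mmap_comp (mmap iota a)).
  by apply: eq_mmap => // c /=; rewrite mmapC.
exists P.
have H0 : map_mpoly iota (F - (P \mPo [tuple f; Delta K])) * map_mpoly iota f = 0.
  apply: mpoly_all0 => a; rewrite mevalM !evE EB Ecomp Pe /=.
  case: (eqVneq (E f a) 0) => [->|nz]; first by rewrite mulr0.
  have [e [He1 He2]] := step1 HF nz.
  rewrite He1 GGe2 He2; apply/eqP; rewrite mulf_eq0 subr_eq0; apply/orP; left.
  apply/eqP; apply: eq_bigr => k _; apply: eq_bigr => i _.
  have [lt|ge] := ltnP i (m * k).
    by rewrite supp // rmorph0 !mul0r.
  rewrite exprMn (exprNn (E f a ^+ m)) -!mulrA; congr (_ * _).
  have -> : tnth [tuple f; Delta K] ord0 = f by [].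
  have -> : E f a ^+ i = E f a ^+ (i - m * k) * (E f a ^+ m) ^+ k.
    by rewrite -exprM -exprD subnK.
  set u : L := (-1) ^+ k.
  have hu : u * u = 1 by rewrite -expr2 sqrr_sign.
  move: (E f a ^+ (i - m * k)) ((E f a ^+ m) ^+ k) (e ^+ k) => A Bq C.
  transitivity ((u * u) * (A * Bq * C)); first by rewrite hu mul1r.
  ring.
have nzf : map_mpoly iota f != 0.
  apply/eqP => H1; have := congr1 (meval (dp 1 0)) H1.
  by rewrite evE Hdpf meval0; apply/eqP; rewrite oner_eq0.
move/eqP: H0; rewrite mulf_eq0 (negbTE nzf) orbF raddfB subr_eq0 => /eqP H0.
apply/mpolyP => mm; apply: (fmorph_inj iota).
by rewrite -!mcoeff_map_mpoly H0.
Qed.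

End Generic.

Lemma Ecomp2 (f g : {mpoly K[5]}) (P : {mpoly K[2]}) a :
  E (P \mPo [tuple f; g]) a = E P (fun j => E (tnth [tuple f; g] j) a).
Proof.
rewrite /comp_mpoly (mmap_comp (mmap iota a)).
by apply: eq_mmap => // c /=; rewrite mmapC.
Qed.

Lemma gen_inv (f : {mpoly K[5]}) :
  (forall r s t a, E f (G1act r s t a) = E f a) ->
  forall (P : {mpoly K[2]}) r s t a,
    E (P \mPo [tuple f; Delta K]) (G1act r s t a) = E (P \mPo [tuple f; Delta K]) a.
Proof.
move=> Hf P r s t a; rewrite !Ecomp2; apply: eq_mmap => // -[[|[|//]] Hj] /=.
  exact: Hf.
exact: Delta_inv.
Qed.
End Main.

Lemma ieq (i j : nat) : (i < 5)%N -> (j < 5)%N -> ((inord i : 'I_5) == inord j) = (i == j).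
Proof. by move=> hi hj; rewrite -val_eqE /= !inordK. Qed.

Lemma ord5 (P : 'I_5 -> Prop) :
  P (inord 0) -> P (inord 1) -> P (inord 2) -> P (inord 3) -> P (inord 4) -> forall i, P i.
Proof.
move=> P0 P1 P2 P3 P4 [[|[|[|[|[|k]]]]] Hi] //.
- by have -> : Ordinal Hi = inord 0 by apply: val_inj; rewrite /= inordK.
- by have -> : Ordinal Hi = inord 1 by apply: val_inj; rewrite /= inordK.
- by have -> : Ordinal Hi = inord 2 by apply: val_inj; rewrite /= inordK.
- by have -> : Ordinal Hi = inord 3 by apply: val_inj; rewrite /= inordK.
- by have -> : Ordinal Hi = inord 4 by apply: val_inj; rewrite /= inordK.
Qed.

Lemma root_n (L : closedFieldType) (n : nat) (y : L) : (0 < n)%N -> exists c : L, c ^+ n = y.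
Proof.
move=> n0; have [c Hc] := @solve_monicpoly L n (fun i => if i == 0%N then y else 0) n0.
exists c; rewrite Hc; case: n n0 {Hc} => // n _.
rewrite big_ord_recl /= expr0 mulr1 big1 ?addr0 // => i _; by rewrite mul0r.
Qed.

Lemma root_2 (L : closedFieldType) (b c : L) : exists s : L, s ^+ 2 = c + b * s.
Proof.
have [s Hs] := @solve_monicpoly L 2 (fun i => if i == 0%N then c else b) isT.
by exists s; rewrite Hs !big_ord_recl big_ord0 /= expr0 expr1 mulr1 addr0.
Qed.

Section Char2.
Variables (K : fieldType) (L : closedFieldType) (iota : {rmorphism K -> L}).
Hypothesis p2 : (2%:R : L) = 0.

Local Notation E p v := (mmap iota v p).

Lemma c2_f_inv r s t a : E (a1 K) (G1act r s t a) = E (a1 K) a.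
Proof. by rewrite !EX; have [-> _ _ _ _] := G1E r s t a; rewrite p2 mul0r addr0. Qed.

Definition w2 (c : L) : {poly L} := (c ^+ 4)%:P + (c ^+ 3)%:P * 'X^3.

Lemma c2_HDnf x e : E (Delta K) (nf (inord 0) x e) = - x ^+ 6 * e.
Proof.
rewrite E_Delta /nf !ieq //=.
have -> : DeltaE x 0 0 0 e = - x ^+ 6 * e + 2%:R * (- 216%:R * e ^+ 2) by rewrite /DeltaE; ring.
by rewrite p2 mul0r addr0.
Qed.

Lemma c2_Hdpf x c : E (a1 K) (dp (inord 0) (inord 2) x c) = x.
Proof. by rewrite EX /dp eqxx. Qed.

Lemma c2_HdpD x c : E (Delta K) (dp (inord 0) (inord 2) x c) = (w2 c).[x].
Proof.
rewrite E_Delta /dp !ieq //= /w2 hornerD hornerC hornerCM hornerXn.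
have -> : DeltaE x 0 c 0 0 = c ^+ 4 + c ^+ 3 * x ^+ 3 + 2%:R * (- 14%:R * c ^+ 4)
  by rewrite /DeltaE; ring.
by rewrite p2 mul0r addr0.
Qed.

Lemma c2_Hw y : exists c, (w2 c).[0] = y.
Proof.
have [c Hc] := root_n y (isT : (0 < 4)%N); exists c.
by rewrite /w2 hornerD hornerC hornerCM hornerXn expr0n /= mulr0 addr0.
Qed.

Lemma c2_Hnf a : E (a1 K) a != 0 ->
  exists r s t e, G1act r s t a =1 nf (inord 0) (E (a1 K) a) e.
Proof.
rewrite EX => nz.
pose A1 := a (inord 0); pose A2 := a (inord 1); pose A3 := a (inord 2).
pose A4 := a (inord 3).
pose r := - A3 / A1.
have [s Hs] := root_2 (- A1) (A2 + 3%:R * r).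
pose t := (A4 - s * A3 + 2%:R * r * A2 - r * s * A1 + 3%:R * r ^+ 2) / A1.
exists r, s, t, (G1act r s t a (inord 4)).
have [E0 E1 E2 E3 E4] := G1E r s t a.
apply: ord5; rewrite /nf ?ieq //=.
- by rewrite E0 p2 mul0r addr0.
- by rewrite E1 Hs /A1 /A2; ring.
- by rewrite E2 p2 mul0r addr0 /r /A1 /A3; field; exact: nz.
- rewrite E3 /t p2 /r /A1 /A2 /A3 /A4; field; exact: nz.
Qed.

End Char2.

Section Char3.
Variables (K : fieldType) (L : closedFieldType) (iota : {rmorphism K -> L}).
Hypothesis p3 : (3%:R : L) = 0.

Local Notation E p v := (mmap iota v p).

Lemma E_b2 a : E (b2 K) a = a (inord 0) ^+ 2 + 4%:R * a (inord 1).
Proof.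
rewrite /b2 /a1 /a2.
by rewrite !(rmorph_nat, rmorph1, rmorphB, rmorphD, rmorphM, rmorphN, rmorphXn) !EX'.
Qed.

Lemma c3_f_inv r s t a : E (b2 K) (G1act r s t a) = E (b2 K) a.
Proof.
rewrite !E_b2; have [-> -> _ _ _] := G1E r s t a.
move: (a (inord 0)) (a (inord 1)) => A1 A2.
have -> : (A1 + 2%:R * s) ^+ 2 + 4%:R * (A2 - s * A1 + 3%:R * r - s ^+ 2) =
  A1 ^+ 2 + 4%:R * A2 + 3%:R * (4%:R * r) by ring.
by rewrite p3 mul0r addr0.
Qed.

Definition w3 (c : L) : {poly L} := - (c ^+ 3)%:P + (c ^+ 2)%:P * 'X^2.

Lemma c3_HDnf x e : E (Delta K) (nf (inord 1) x e) = - x ^+ 3 * e.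
Proof.
rewrite E_Delta /nf !ieq //=.
have -> : DeltaE 0 x 0 0 e = - x ^+ 3 * e + 3%:R * (- 21%:R * x ^+ 3 * e - 144%:R * e ^+ 2)
  by rewrite /DeltaE; ring.
by rewrite p3 mul0r addr0.
Qed.

Lemma c3_Hdpf x c : E (b2 K) (dp (inord 1) (inord 3) x c) = x.
Proof.
rewrite E_b2 /dp !ieq //=.
have -> : (0 : L) ^+ 2 + 4%:R * x = x + 3%:R * x by ring.
by rewrite p3 mul0r addr0.
Qed.

Lemma c3_HdpD x c : E (Delta K) (dp (inord 1) (inord 3) x c) = (w3 c).[x].
Proof.
rewrite E_Delta /dp !ieq //= /w3 hornerD hornerN hornerC hornerCM hornerXn.
have -> : DeltaE 0 x 0 c 0 = - c ^+ 3 + c ^+ 2 * x ^+ 2 +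
    3%:R * (5%:R * x ^+ 2 * c ^+ 2 - 21%:R * c ^+ 3)
  by rewrite /DeltaE; ring.
by rewrite p3 mul0r addr0.
Qed.

Lemma c3_Hw y : exists c, (w3 c).[0] = y.
Proof.
have [c Hc] := root_n (- y) (isT : (0 < 3)%N); exists c.
by rewrite /w3 hornerD hornerN hornerC hornerCM hornerXn expr0n /= mulr0 addr0 Hc opprK.
Qed.

Lemma c3_Hnf a : E (b2 K) a != 0 ->
  exists r s t e, G1act r s t a =1 nf (inord 1) (E (b2 K) a) e.
Proof.
rewrite E_b2 => nz.
pose r := (a (inord 3) - a (inord 0) * a (inord 2)) / (a (inord 0) ^+ 2 + 4%:R * a (inord 1)).
pose s := a (inord 0).
pose t := a (inord 2) + r * a (inord 0).
exists r, s, t, (G1act r s t a (inord 4)).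
have [E0 E1 E2 E3 E4] := G1E r s t a.
apply: ord5; rewrite /nf ?ieq //=.
- rewrite E0 /s.
  have -> : a (inord 0) + 2%:R * a (inord 0) = 3%:R * a (inord 0) by ring.
  by rewrite p3 mul0r.
- rewrite E1 /s.
  have id1 : forall R A1 A2 : L,
      A2 - A1 * A1 + 3%:R * R - A1 ^+ 2 = A1 ^+ 2 + 4%:R * A2 + 3%:R * (R - A2 - A1 ^+ 2).
    by move=> *; ring.
  by rewrite id1 p3 mul0r addr0.
- rewrite E2 /t.
  have id2 : forall R A1 A3 : L,
      A3 + R * A1 + 2%:R * (A3 + R * A1) = 3%:R * (A3 + R * A1).
    by move=> *; ring.
  by rewrite id2 p3 mul0r.
- rewrite E3 /t /s.
  have Hr : a (inord 3) - a (inord 0) * a (inord 2) - r * (a (inord 0) ^+ 2 + 4%:R * a (inord 1)) = 0.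
    by rewrite /r; field.
  have id3 : forall R A1 A2 A3 A4 : L,
    A4 - A1 * A3 + 2%:R * R * A2 - (A3 + R * A1 + R * A1) * A1 + 3%:R * R ^+ 2
      - 2%:R * A1 * (A3 + R * A1) =
    (A4 - A1 * A3 - R * (A1 ^+ 2 + 4%:R * A2)) +
      3%:R * (- A1 * A3 + 2%:R * R * A2 - R * A1 ^+ 2 + R ^+ 2).
    by move=> *; ring.
  by rewrite id3 Hr p3 mul0r addr0.
Qed.

End Char3.

Theorem lemma10p1 (K : fieldType) (L : closedFieldType)
  (iota : {rmorphism K -> L}) :
  algebraic_over iota -> perfect_field K ->
  (2%N \in [pchar K] ->
     forall F : {mpoly K[5]}, G1_invariant iota F <-> generated2 (a1 K) (Delta K) F) /\
  (3%N \in [pchar K] ->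
     forall F : {mpoly K[5]}, G1_invariant iota F <-> generated2 (b2 K) (Delta K) F).
Proof.
move=> _ _; split => Hp F.
  have p2 : (2%:R : L) = 0 by rewrite -(rmorph_nat iota) (pcharf0 Hp) rmorph0.
  rewrite /G1_invariant /generated2; split.
    move=> HF.
    have HF' : forall r s t a, mmap iota (G1act r s t a) F = mmap iota a F.
      by move=> r s t a; rewrite -!evE HF.
    exact: (inv_gen (@c2_Hnf K L iota p2) (c2_HDnf iota p2) (c2_Hdpf iota) (c2_HdpD iota p2)
              (@c2_Hw L) HF').
  by move=> [P ->] r s t a; rewrite !evE; exact: (gen_inv (c2_f_inv iota p2)).
have p3 : (3%:R : L) = 0 by rewrite -(rmorph_nat iota) (pcharf0 Hp) rmorph0.
rewrite /G1_invariant /generated2; split.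
  move=> HF.
  have HF' : forall r s t a, mmap iota (G1act r s t a) F = mmap iota a F.
    by move=> r s t a; rewrite -!evE HF.
  exact: (inv_gen (@c3_Hnf K L iota p3) (c3_HDnf iota p3) (c3_Hdpf iota p3) (c3_HdpD iota p3)
            (@c3_Hw L) HF').
by move=> [P ->] r s t a; rewrite !evE; exact: (gen_inv (c3_f_inv iota p3)).
Qed.
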